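(* Let $(H,\eta)$ be a rigid extended strip decomposition of an $n$-vertex graph $G$. Then $|E(H)|\leq n$ and $|V(H)|\leq 2n$.
   Context: All graphs are finite and simple. $T(H)$ denotes the set of triangles of $H$, a triangle on $x,y,z$ written $xyz$. Two vertex sets are complete to each other if every vertex of one is adjacent to every vertex of the other. An extended strip decomposition of a graph $G$ is a pair $(H,\eta)$ where $H$ is a simple graph and $\eta$ assigns: a set $\eta(x)\subseteq V(G)$ to each $x\in V(H)$; a set $\eta(xy)\subseteq V(G)$ to each $xy\in E(H)$, together with subsets $\eta(xy,x),\eta(xy,y)\subseteq \eta(xy)$; and a set $\eta(xyz)\subseteq V(G)$ to each $xyz\in T(H)$; such that (1) the sets $\eta(o)$, $o\in V(H)\cup E(H)\cup T(H)$, are pairwise disjoint (possibly empty) and their union is $V(G)$; (2) for every $x\in V(H)$ and distinct $y,z\in N_H(x)$, $\eta(xy,x)$ is complete to $\eta(xz,x)$; (3) every edge $uv\in E(G)$ either has both ends in one set $\eta(o)$, or $u\in\eta(xy,x)$, $v\in\eta(xz,x)$ for some $x\in V(H)$ and $y,z\in N_H(x)$, or $u\in\eta(xy,x)$, $v\in\eta(x)$ for some $xy\in E(H)$, or $u\in\eta(xyz)$, $v\in\eta(xy,x)\cap\eta(xy,y)$ for some $xyz\in T(H)$. It is rigid if $\eta(xy,x)\neq\emptyset$ for every edge $xy\in E(H)$ (for both ends $x$ of the edge), and $\eta(x)\neq\emptyset$ for every isolated vertex $x$ of $H$. *)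

(* Defs.v *)
From mathcomp Require Import all_boot.
Set Implicit Arguments. Unset Strict Implicit. Unset Printing Implicit Defensive.

Definition simple_graph (T : finType) (e : rel T) : Prop :=
  symmetric e /\ irreflexive e.

Section ESD.
Variables (V W : finType) (eG : rel V) (eH : rel W).

Definition Hedges : {set {set W}} :=
  [set e : {set W} | [exists x, exists y, eH x y && (e == [set x; y])]].

Definition Htris : {set {set W}} :=
  [set t : {set W} | [exists x, exists y, exists z,
      [&& eH x y, eH y z, eH x z & t == [set x; y; z]]]].

Definition complete_to (A B : {set V}) : Prop :=
  forall a b, a \in A -> b \in B -> eG a b.

(* eta(x) = etaV x; eta(e) = etaE e; eta(e, x) = etaEnd e x; eta(t) = etaT t *)
Variables (etaV : W -> {set V}) (etaE : {set W} -> {set V})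
          (etaEnd : {set W} -> W -> {set V}) (etaT : {set W} -> {set V}).

(* an edge uv of G is accounted for by condition (3) with u, v in this order *)
Definition edge_ok (u v : V) : Prop :=
  (exists x, u \in etaV x /\ v \in etaV x) \/
  (exists e, e \in Hedges /\ u \in etaE e /\ v \in etaE e) \/
  (exists t, t \in Htris /\ u \in etaT t /\ v \in etaT t) \/
  (exists x y z, eH x y /\ eH x z /\
      u \in etaEnd [set x; y] x /\ v \in etaEnd [set x; z] x) \/
  (exists x y, eH x y /\ u \in etaEnd [set x; y] x /\ v \in etaV x) \/
  (exists x y z, [set x; y; z] \in Htris /\ u \in etaT [set x; y; z] /\
      v \in etaEnd [set x; y] x :&: etaEnd [set x; y] y).

Definition is_ext_strip_decomposition : Prop :=
  (forall x y, eH x y -> etaEnd [set x; y] x \subset etaE [set x; y]) /\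
  (forall x y, x != y -> [disjoint etaV x & etaV y]) /\
  (forall e f, e \in Hedges -> f \in Hedges -> e != f -> [disjoint etaE e & etaE f]) /\
  (forall s t, s \in Htris -> t \in Htris -> s != t -> [disjoint etaT s & etaT t]) /\
  (forall x e, e \in Hedges -> [disjoint etaV x & etaE e]) /\
  (forall x t, t \in Htris -> [disjoint etaV x & etaT t]) /\
  (forall e t, e \in Hedges -> t \in Htris -> [disjoint etaE e & etaT t]) /\
  (forall v : V, (exists x, v \in etaV x) \/
                 (exists e, e \in Hedges /\ v \in etaE e) \/
                 (exists t, t \in Htris /\ v \in etaT t)) /\
  (forall x y z, eH x y -> eH x z -> y != z ->
     complete_to (etaEnd [set x; y] x) (etaEnd [set x; z] x)) /\
  (forall u v, eG u v -> edge_ok u v \/ edge_ok v u).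

Definition rigid : Prop :=
  (forall x y, eH x y -> etaEnd [set x; y] x != set0) /\
  (forall x, (forall y, ~~ eH x y) -> etaV x != set0).

End ESD.

(* Main.v *)
Require Import Defs.
From mathcomp Require Import all_boot.

Lemma set2_eq (W : finType) (x y x' y' : W) :
  [set x; y] = [set x'; y'] -> x != x' -> x' = y /\ y' = x.
Proof.
move=> E nx.
have : x' \in [set x; y] by rewrite E !inE eqxx.
rewrite !inE => /orP[/eqP h|/eqP h]; first by rewrite h eqxx in nx.
have : x \in [set x'; y'] by rewrite -E !inE eqxx.
rewrite !inE => /orP[/eqP h'|/eqP h']; first by rewrite h' eqxx in nx.
by [].
Qed.

Theorem mainTheorem4 (V W : finType) (eG : rel V) (eH : rel W)
  (etaV : W -> {set V}) (etaE : {set W} -> {set V})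
  (etaEnd : {set W} -> W -> {set V}) (etaT : {set W} -> {set V}) :
  simple_graph eG -> simple_graph eH ->
  is_ext_strip_decomposition eG eH etaV etaE etaEnd etaT ->
  rigid eH etaV etaEnd ->
  #|Hedges eH| <= #|V| /\ #|W| <= 2 * #|V|.
Proof.
move=> _ [symH irrH] [sub [dV [dE [_ [dVE _]]]]] [rE rV].
have inHe x y : eH x y -> [set x; y] \in Hedges eH.
  by move=> h; rewrite inE; apply/existsP; exists x; apply/existsP; exists y; rewrite h eqxx.
have [v0 _ | V0] := pickP (predT : pred V); last first.
  have W0 : forall x : W, False.
    move=> x; case: (pickP (eH x)) => [y hy | hn].
      by have /set0Pn [v _] := rE x y hy; have := V0 v.
    have /set0Pn [v _] := rV x (fun y => negbT (hn y)); by have := V0 v.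
  have cW : #|W| = 0 by apply: eq_card0 => x; case: (W0 x).
  have cE : #|Hedges eH| = 0.
    apply: eq_card0 => e; apply/negbTE/negP; rewrite inE => /existsP[x _]; case: (W0 x).
  by rewrite cW cE.
split.
  pose f (e : {set W}) := odflt v0 [pick v in etaE e].
  have fin e : e \in Hedges eH -> f e \in etaE e.
    rewrite inE => /existsP[x /existsP[y /andP[hxy /eqP ->]]].
    rewrite /f; case: pickP => [v -> //|hn].
    have /set0Pn [v hv] := rE x y hxy.
    by have := hn v; rewrite (subsetP (sub x y hxy) v hv).
  rewrite -(card_in_imset (f := f)); first exact: max_card.
  move=> e e' he he' feq; apply/eqP/negPn/negP => ne.
  have := disjointFr (dE e e' he he' ne) (fin e he).
  by rewrite feq (fin e' he').
pose f (x : W) : V * bool :=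
  match [pick y | eH x y] with
  | Some y => (odflt v0 [pick v in etaEnd [set x; y] x], enum_rank x < enum_rank y)
  | None => (odflt v0 [pick v in etaV x], true) end.
have finE x y : eH x y -> odflt v0 [pick v in etaEnd [set x; y] x] \in etaE [set x; y].
  move=> hxy; case: pickP => [v hv /=|hn]; first exact: (subsetP (sub x y hxy)).
  have /set0Pn [v hv] := rE x y hxy; by have := hn v; rewrite hv.
have finV x : (forall y, ~~ eH x y) -> odflt v0 [pick v in etaV x] \in etaV x.
  move=> hn; case: pickP => [v hv //|hn'].
  have /set0Pn [v hv] := rV x hn; by have := hn' v; rewrite hv.
have finj : injective f.
  move=> x x'; rewrite /f.
  case: (pickP (fun z => eH x z)) => [y hy | hn]; case: (pickP (fun z => eH x' z)) => [y' hy' | hn'] E; have /= e1 := f_equal fst E; have /= e2 := f_equal snd E.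
  - apply/eqP/negPn/negP => nx.
    have ee : [set x; y] = [set x'; y'].
      apply/eqP/negPn/negP => ne.
      have := disjointFr (dE _ _ (inHe _ _ hy) (inHe _ _ hy') ne) (finE _ _ hy).
      by rewrite e1 finE.
    have [ex ey] := @set2_eq _ _ _ _ _ ee nx.
    move: e2; rewrite ex ey.
    case: (ltngtP (enum_rank x) (enum_rank y)) => // /val_inj /enum_rank_inj exy _.
    by rewrite exy irrH in hy.
  - have := disjointFr (dVE x' _ (inHe _ _ hy)) (finV x' (fun z => negbT (hn' z))).
    by rewrite -e1 finE.
  - have := disjointFr (dVE x _ (inHe _ _ hy')) (finV x (fun z => negbT (hn z))).
    by rewrite e1 finE.
  - apply/eqP/negPn/negP => nx.
    have := disjointFr (dV _ _ nx) (finV x (fun z => negbT (hn z))).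
    by rewrite e1 finV // => z; rewrite hn'.
have := max_card [set f x | x in [set: W]].
by rewrite card_imset // cardsT card_prod card_bool mulnC.
Qed.
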